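(* Let $p$ be a prime with $p\equiv 1\pmod 8$, let $n$ be the least integer with $2^n>p$, let $N=2^n$, and let $\theta=\arccos\!\left(1-\frac{N}{p-1}\right)$. For $x\in\{0,1,\ldots,N-1\}$ let $x_0$ be the least significant bit of $x$ and let $f(x)=1$ if $0\le x<p$ and $\left(\frac{x}{p}\right)=-1$, and $f(x)=0$ otherwise. Define amplitudes $\alpha_x=\frac{1}{\sqrt N}e^{i\theta f(x)(1-2x_0)}$ for $0\le x<N$, let $\bar\alpha=\frac{1}{N}\sum_{x=0}^{N-1}\alpha_x$, and let $\beta_x=2\bar\alpha-\alpha_x$ (the result of inversion about the mean, as implemented by a Grover diffusion step). Then $\bar\alpha=\frac{1}{2\sqrt N}$, $\beta_x=\frac{1}{\sqrt N}\bigl(1-e^{i\theta f(x)(1-2x_0)}\bigr)$, $\beta_x=0$ whenever $f(x)=0$, and $|\beta_x|^2=\frac{2}{p-1}$ whenever $f(x)=1$. Consequently, measuring the state $\sum_x\beta_x|x\rangle$ in the computational basis yields a quadratic nonresidue modulo $p$ with probability $1$, uniformly distributed over the $\frac{p-1}{2}$ quadratic nonresidues in $\{1,\ldots,p-1\}$.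
   Context: $\left(\frac{x}{p}\right)$ denotes the Legendre (Jacobi) symbol modulo the odd prime $p$: $1$ for quadratic residues, $-1$ for quadratic nonresidues, $0$ for $x\equiv 0\pmod p$. A quadratic nonresidue modulo $p$ is an integer $a$ coprime to $p$ such that $x^2\equiv a\pmod p$ has no solution. *)

(* Defs.v *)
From Stdlib Require Import Reals ZArith.
From Coquelicot Require Import Coquelicot.
From mathcomp Require Import ssreflect ssrfun ssrbool eqtype ssrnat div seq fintype bigop prime.

Set Implicit Arguments.
Unset Strict Implicit.
Unset Printing Implicit Defensive.

Definition sq_solvable (a p : nat) : bool :=
  [exists y : 'I_p, (y ^ 2 == a %[mod p])%N].

Definition legendre (a p : nat) : Z :=
  if (p %| a)%N then 0%Z else if sq_solvable a p then 1%Z else (-1)%Z.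

Definition qnr (a p : nat) : bool := coprime a p && ~~ sq_solvable a p.

Definition foracle (p x : nat) : bool := (x < p)%N && Z.eqb (legendre x p) (-1)%Z.

Definition lsb (x : nat) : nat := x %% 2.

Definition cexpi (t : R) : C := (cos t, sin t).

Definition theta (p N : nat) : R := acos (1 - INR N / INR (p - 1)).

Definition phase (p N x : nat) : R :=
  (theta p N * INR (nat_of_bool (foracle p x)) * (1 - 2 * INR (lsb x)))%R.

Definition alpha (p N x : nat) : C :=
  Cmult (RtoC (/ sqrt (INR N))) (cexpi (phase p N x)).

Definition alpha_bar (p N : nat) : C :=
  Cmult (RtoC (/ INR N)) (\big[Cplus/RtoC 0]_(x < N) alpha p N x).

Definition beta (p N x : nat) : C :=
  Cminus (Cmult (RtoC 2) (alpha_bar p N)) (alpha p N x).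

(* Main.v *)
Require Import Defs.
From Stdlib Require Import Reals ZArith.
From Coquelicot Require Import Coquelicot.
From mathcomp Require Import ssreflect ssrfun ssrbool eqtype ssrnat div seq fintype bigop prime.
From Stdlib Require Import Lia Lra.
From HB Require Import structures.
From mathcomp Require Import binomial finset ssralg zmodp.
From mathcomp Require Import zify.
Set Implicit Arguments. Unset Strict Implicit. Unset Printing Implicit Defensive.

Section NT.
Import GRing.Theory.
Local Open Scope ring_scope.
Variable p : nat.
Hypothesis pp : prime p.

Lemma Fp_eq (a b : nat) : ((a%:R : 'F_p) = b%:R) <-> (a = b %[mod p])%N.
Proof.
split=> [H|H].
  have := congr1 (@nat_of_ord _) H; rewrite !(val_Fp_nat pp) //=.
by rewrite -(Fp_nat_mod pp) H (Fp_nat_mod pp).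
Qed.

Lemma Fp_eq0 (a : nat) : ((a%:R : 'F_p) = 0) <-> (p %| a)%N.
Proof.
rewrite -[0]/((0%N)%:R) Fp_eq mod0n /dvdn; split => [->|/eqP] //.
Qed.

Lemma sqP (a : nat) : sq_solvable a p <-> exists z : nat, (z%:R : 'F_p) ^+ 2 = a%:R.
Proof.
have p0 : (0 < p)%N by apply: prime_gt0.
split.
  case/existsP=> y /eqP H; exists y; rewrite -natrX; exact/Fp_eq.
case=> z Hz; apply/existsP; exists (Ordinal (ltn_pmod z p0)); apply/eqP => /=.
apply Fp_eq; by rewrite natrX (Fp_nat_mod pp).
Qed.


Lemma ffact_Fp (m : nat) : (m < p)%N ->
  (((p.-1) ^_ m)%:R : 'F_p) = (-1) ^+ m * (m`!)%:R.
Proof.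
elim: m => [|m IH] Hm; first by rewrite ffactn0 fact0 expr0 mul1r.
rewrite ffactnSr natrM IH; last by lia.
have -> : (p.-1 - m = p - m.+1)%N by lia.
rewrite natrB; last by lia.
rewrite (pchar_Fp_0 pp) factS natrM exprS.
rewrite sub0r mulrN mulN1r mulNr -mulrA; congr (- (_ * _)); exact: mulrC.
Qed.

Lemma wilson_sq : (p %% 8 = 1)%N ->
  ((((p - 1) %/ 2)`!)%:R : 'F_p) ^+ 2 = -1.
Proof.
move=> H8.
have p1 : (1 < p)%N by apply: prime_gt1.
set h := ((p - 1) %/ 2)%N.
have Hh : (p.-1 - h = h)%N by rewrite /h; lia.
have Hh2 : (h = 2 * ((p - 1) %/ 4))%N by rewrite /h; lia.
have W : ((p.-1)`!)%:R = (-1 : 'F_p).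
  have := (Wilson p1); rewrite pp => /esym /Fp_eq0.
  by move=> E; apply/eqP; rewrite -addr_eq0 natr1 E.
rewrite -W -(ffact_fact (_ : h <= p.-1)%N); last by rewrite /h; lia.
rewrite Hh natrM ffact_Fp; last by rewrite /h; lia.
rewrite {2}Hh2 exprM sqrrN expr1n expr1n.
by rewrite mul1r expr2.
Qed.


Lemma sq_neg_aux (x : nat) : (p %% 8 = 1)%N -> (x <= p)%N ->
  sq_solvable x p -> sq_solvable (p - x) p.
Proof.
move=> H8 Hx /sqP [z Hz]; apply/sqP.
exists ((((p - 1) %/ 2)`!) * z)%N.
rewrite natrM exprMn wilson_sq // Hz natrB // (pchar_Fp_0 pp).
by rewrite mulN1r sub0r.
Qed.

Lemma sq_neg (x : nat) : (p %% 8 = 1)%N -> (x <= p)%N ->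
  sq_solvable (p - x) p = sq_solvable x p.
Proof.
move=> H8 Hx; apply/idP/idP; last exact: sq_neg_aux.
move=> H; have := sq_neg_aux H8 (leq_subr x p) H.
by rewrite subKn.
Qed.

Lemma sq_count : (p %% 8 = 1)%N ->
  #|[pred a : 'I_p | (0 < a)%N && sq_solvable a p]| = ((p - 1) %/ 2)%N.
Proof.
move=> H8.
have p0 : (0 < p)%N by apply: prime_gt0.
set h := ((p - 1) %/ 2)%N.
have hp : (2 * h < p)%N by rewrite /h; lia.
pose g (i : 'I_h) : 'I_p := Ordinal (ltn_pmod (i.+1 ^ 2) p0).
have ginj : injective g.
  move=> i j /(congr1 (@nat_of_ord _)) /= E.
  have : ((i.+1)%:R : 'F_p) ^+ 2 == (j.+1)%:R ^+ 2.
    by rewrite -!natrX; apply/eqP/Fp_eq.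
  rewrite eqf_sqr => /orP [/eqP /Fp_eq|].
    have := ltn_ord i; have := ltn_ord j => ??.
    rewrite !modn_small; try lia.
    by move=> [] /val_inj.
  move/eqP => E2.
  have : (((i.+1 + j.+1)%N)%:R : 'F_p) = 0 by rewrite natrD E2 addNr.
  move=> /Fp_eq0 /dvdn_leq.
  have := ltn_ord i; have := ltn_ord j; lia.
have -> : h = #|[set: 'I_h]| by rewrite cardsT card_ord.
rewrite -(card_imset _ ginj).
apply: eq_card => a; rewrite !inE.
apply/andP/imsetP.
  case=> a0 /sqP [z Hz].
  set r := (z %% p)%N.
  have Hr : (r%:R : 'F_p) = z%:R by rewrite /r (Fp_nat_mod pp).
  have rp : (r < p)%N by rewrite /r ltn_pmod.
  have r0 : (0 < r)%N.
    case: (posnP r) => // r0.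
    move: Hz; rewrite -Hr r0 expr2 mulr0 => /esym /Fp_eq0 /dvdn_leq.
    have := ltn_ord a; lia.
  have key : forall t : nat, (0 < t <= h)%N -> ((t%:R : 'F_p) ^+ 2 = a%:R) ->
      exists2 i, i \in [set: 'I_h] & a = g i.
    move=> t Ht Et.
    have ti : (t.-1 < h)%N by lia.
    exists (Ordinal ti); rewrite ?inE //.
    apply: val_inj => /=.
    have -> : (t.-1.+1 = t)%N by lia.
    move: Et; rewrite -natrX => /Fp_eq ->.
    by rewrite modn_small.
  case: (leqP r h) => Hrh.
    apply: (key r); first by lia.
    by rewrite Hr.
  apply: (key (p - r)%N); first by rewrite /h in Hrh *; lia.
  by rewrite natrB ?(ltnW rp) // (pchar_Fp_0 pp) sub0r sqrrN Hr.
case=> i _ ->; split.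
  rewrite /= lt0n; apply/negP => /eqP E.
  have : (p %| i.+1 ^ 2)%N by rewrite /dvdn E.
  rewrite (Euclid_dvdX _ _ pp) => /andP [/dvdn_leq] H _.
  have : (i < h)%N by []. rewrite /h in H *; lia.
apply/sqP; exists i.+1.
by rewrite /= (Fp_nat_mod pp) natrX.
Qed.

End NT.

Section NT2.
Variable p : nat.
Hypothesis pp : prime p.
Hypothesis H8 : (p %% 8 = 1)%N.

Lemma f_iff (x : nat) : (x < p)%N -> foracle p x = (0 < x)%N && qnr x p.
Proof.
move=> Hx; rewrite /foracle /legendre /qnr Hx /=.
case: (posnP x) => [->|x0]; first by rewrite dvdn0.
have nd : ~~ (p %| x)%N by apply/negP => /dvdn_leq; lia.
rewrite (negbTE nd) coprime_sym prime_coprime // nd /=.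
by case: (sq_solvable x p).
Qed.

Lemma f_ge (x : nat) : (p <= x)%N -> foracle p x = false.
Proof. by rewrite /foracle leqNgt => /negbTE ->. Qed.

Lemma f0 : foracle p 0 = false.
Proof. by rewrite /foracle /legendre dvdn0 (prime_gt0 pp). Qed.

Lemma f_sym (x : nat) : (0 < x < p)%N -> foracle p (p - x) = foracle p x.
Proof.
move=> /andP [x0 xp].
have px : (p - x < p)%N by lia.
rewrite (f_iff px) (f_iff xp).
have -> : (0 < p - x)%N by lia.
rewrite x0 /= /qnr (sq_neg pp H8 (ltnW xp)).
congr (_ && _).
rewrite coprime_sym (prime_coprime _ pp) coprime_sym (prime_coprime _ pp).
have -> : (p %| p - x)%N = false by apply/negP => /dvdn_leq; lia.
have -> : (p %| x)%N = false by apply/negP => /dvdn_leq; lia.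
by [].
Qed.

Lemma qnr_count :
  #|[pred a : 'I_p | (0 < a)%N && qnr a p]| = ((p - 1) %/ 2)%N.
Proof.
have p0 : (0 < p)%N by apply: prime_gt0.
have := cardID [pred a : 'I_p | sq_solvable a p] [pred a : 'I_p | (0 < a)%N].
have -> : #|[pred a : 'I_p | (0 < a)%N]| = p.-1.
  have <- : #|predC1 (Ordinal p0)| = p.-1 by rewrite cardC1 card_ord.
  apply: eq_card => a; rewrite !inE lt0n.
  by rewrite -val_eqE.
have -> : #|[predI [pred a : 'I_p | (0 < a)%N] & [pred a : 'I_p | sq_solvable a p]]|
   = ((p - 1) %/ 2)%N.
  rewrite -(sq_count pp H8); apply: eq_card => a; by rewrite !inE.
have -> : #|[predD [pred a : 'I_p | (0 < a)%N] & [pred a : 'I_p | sq_solvable a p]]|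
   = #|[pred a : 'I_p | (0 < a)%N && qnr a p]|.
  apply: eq_card => a; rewrite !inE /qnr.
  case: (posnP a) => [->|a0] /=; first by rewrite andbF.
  rewrite andbC coprime_sym prime_coprime //.
  suff -> : ~~ (p %| a)%N by [].
  by apply/negP => /dvdn_leq H; have := ltn_ord a; lia.
lia.
Qed.

End NT2.

Delimit Scope R_scope with R.

Lemma Rplus_assoc' : associative Rplus. Proof. by move=> *; rewrite Rplus_assoc. Qed.
HB.instance Definition _ := Monoid.isComLaw.Build R 0%R Rplus Rplus_assoc' Rplus_comm Rplus_0_l.

Lemma Cplus_assoc' : associative Cplus. Proof. by move=> *; rewrite Cplus_assoc. Qed.
HB.instance Definition _ := Monoid.isComLaw.Build C (RtoC 0%R) Cplus Cplus_assoc' Cplus_comm Cplus_0_l.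

Lemma big_trunc (T : Type) (idx : T) (op : Monoid.law idx) (F : nat -> T) (p M : nat) :
  (p <= M)%N -> (forall x, (p <= x)%N -> F x = idx) ->
  \big[op/idx]_(x < M) F x = \big[op/idx]_(x < p) F x.
Proof.
move=> pM HF; rewrite -!(big_mkord xpredT) (big_cat_nat (leq0n p) pM) /=.
rewrite [X in op _ X]big1_seq ?Monoid.mulm1 // => i.
move=> /andP [_]; rewrite mem_index_iota => /andP [H _]; exact: HF.
Qed.

Lemma recR (M : nat) (F : nat -> R) :
  \big[Rplus/0%R]_(i < M.+1) F i = (\big[Rplus/0%R]_(i < M) F i + F M)%R.
Proof. by rewrite big_ord_recr. Qed.

Lemma sum_lin (M : nat) (a b : R) (G : nat -> R) :
  \big[Rplus/0%R]_(x < M) (a + b * G x)%R = (INR M * a + b * \big[Rplus/0%R]_(x < M) G x)%R.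
Proof.
elim: M => [|M IH]; first by rewrite !big_ord0 /=; ring.
rewrite (recR M (fun x => a + b * G x)%R) (recR M G) IH S_INR; ring.
Qed.

Lemma sum_bool (M : nat) (P : nat -> bool) :
  \big[Rplus/0%R]_(x < M) INR (nat_of_bool (P x)) = INR (\sum_(x < M) P x).
Proof.
elim: M => [|M IH]; first by rewrite !big_ord0.
by rewrite (recR M (fun x => INR (P x))) big_ord_recr /= IH plus_INR.
Qed.

Lemma Csum (M : nat) (F : nat -> C) :
  \big[Cplus/RtoC 0]_(x < M) F x =
  (\big[Rplus/0%R]_(x < M) fst (F x), \big[Rplus/0%R]_(x < M) snd (F x)).
Proof.
elim: M => [|M IH]; first by rewrite !big_ord0.
by rewrite [LHS]big_ord_recr /= IH (recR M (fun x => fst (F x))) (recR M (fun x => snd (F x))).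
Qed.



Lemma Cmod_sq (z : C) : (Cmod z ^ 2 = fst z * fst z + snd z * snd z)%R.
Proof.
rewrite /Cmod pow2_sqrt; first by simpl; ring.
by apply: Rplus_le_le_0_compat; apply: pow2_ge_0.
Qed.

Definition sigf (p x : nat) : nat := if x == 0%N then 0%N else (p - x)%N.

Lemma sigf_lt (p : nat) (x : 'I_p) : (sigf p x < p)%N.
Proof. rewrite /sigf; case: eqP => [_|]; have := ltn_ord x; lia. Qed.

Definition sigo (p : nat) (x : 'I_p) : 'I_p := Ordinal (sigf_lt x).

Lemma sigo_inj (p : nat) : injective (@sigo p).
Proof.
apply: (can_inj (g := @sigo p)) => x; apply: val_inj => /=.
rewrite /sigf; have := ltn_ord x; case: (posnP (nat_of_ord x)) => [->|x0] //= xp.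
have -> : ((p - nat_of_ord x)%N == 0%N) = false by apply/eqP; lia.
lia.
Qed.

Theorem mainTheorem3 (p n : nat) :
  prime p -> (p %% 8 = 1)%N ->
  (* n is the least integer with 2^n > p *)
  (p < 2 ^ n)%N -> (forall m : nat, (p < 2 ^ m)%N -> (n <= m)%N) ->
  let N := (2 ^ n)%N in
  [/\ alpha_bar p N = RtoC (/ (2 * sqrt (INR N))),
      (forall x : nat, (x < N)%N ->
         beta p N x = Cmult (RtoC (/ sqrt (INR N))) (Cminus (RtoC 1) (cexpi (phase p N x)))),
      (forall x : nat, (x < N)%N -> foracle p x = false -> beta p N x = RtoC 0),
      (forall x : nat, (x < N)%N -> foracle p x = true ->
         (Cmod (beta p N x) ^ 2)%R = (2 / INR (p - 1))%R) &
      (* consequences for measuring sum_x beta_x |x> in the computational basis *)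
      [/\ (\big[Rplus/0%R]_(x < N) (Cmod (beta p N x) ^ 2)%R)%R = 1%R,
          (\big[Rplus/0%R]_(x < N | (0 < x < p)%N && qnr x p) (Cmod (beta p N x) ^ 2)%R)%R = 1%R,
          (forall a : nat, (0 < a < p)%N -> qnr a p ->
             (a < N)%N /\ (Cmod (beta p N a) ^ 2)%R = (2 / INR (p - 1))%R) &
          #|[pred a : 'I_p | (0 < a)%N && qnr a p]| = ((p - 1) %/ 2)%N]].

Proof.
move=> pp H8 Hlt Hmin N.
have p0 : (0 < p)%N := prime_gt0 pp.
have p1 : (1 < p)%N := prime_gt1 pp.
set h := ((p - 1) %/ 2)%N.
have n0 : (0 < n)%N.
  by case: (posnP n) Hlt => // ->; rewrite expn0; lia.
have Hm1 : (2 ^ n.-1 <= p)%N.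
  by rewrite leqNgt; apply/negP => /Hmin; lia.
have NN : N = (2 * 2 ^ n.-1)%N by rewrite /N -expnS prednK.
have Hle : (N <= 2 * (p - 1))%N.
  case: (posnP n.-1) => e; first by rewrite NN e expn0; lia.
  have : (2 ^ n.-1 = 2 * 2 ^ n.-1.-1)%N by rewrite -expnS prednK.
  lia.
have NltP : (p < N)%N by [].
have Knat : (\sum_(x < N) foracle p x)%N = h.
  rewrite (@big_trunc nat 0%N addn (fun x => nat_of_bool (foracle p x)) p N); last 2 first.
  - lia.
  - by move=> x Hx; rewrite f_ge.
  rewrite (eq_bigr (fun x : 'I_p => nat_of_bool ((0 < x)%N && qnr x p))); last first.
    by move=> i _; rewrite f_iff.
  rewrite /h -(qnr_count pp H8) -sum1_card [RHS]big_mkcond /=.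
  by apply: eq_bigr => i _; rewrite inE; case: (_ && _).
have RN : (0 < INR N)%R by apply: lt_0_INR; lia.
have Rp : (0 < INR (p - 1))%R by apply: lt_0_INR; lia.
have RNle : (INR N <= 2 * INR (p - 1))%R.
  have : (INR N <= INR (2 * (p - 1)))%R by apply: le_INR; lia.
  by rewrite mult_INR /=; lra.
set c0 := (1 - INR N / INR (p - 1))%R.
have hc : (-1 <= c0 <= 1)%R.
  set q := (INR N / INR (p - 1))%R.
  have Hq : (q * INR (p - 1) = INR N)%R by rewrite /q; field; lra.
  rewrite /c0 -/q; split; nra.
have cth : cos (theta p N) = c0 by rewrite /theta cos_acos.
have Rh : (2 * INR h = INR (p - 1))%R.
  have -> : (p - 1 = 2 * h)%N by rewrite /h; lia.
  by rewrite mult_INR /=; ring.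
have sN : (0 < sqrt (INR N))%R by apply: sqrt_lt_R0.
have sN2 : (sqrt (INR N) * sqrt (INR N) = INR N)%R by apply: sqrt_sqrt; lra.
have lsb01 : forall x, lsb x = 0%N \/ lsb x = 1%N by move=> x; rewrite /lsb; lia.
have phF : forall x, foracle p x = false -> phase p N x = 0%R.
  by move=> x Hf; rewrite /phase Hf /=; ring.
have cosph : forall x, cos (phase p N x) = (1 + (c0 - 1) * INR (foracle p x))%R.
  move=> x; case Hf: (foracle p x); last by rewrite phF // cos_0 /=; ring.
  rewrite /phase Hf /=.
  case: (lsb01 x) => ->.
    by rewrite (_ : (theta p N * 1 * (1 - 2 * INR 0) = theta p N)%R) /= ?cth; [ring | simpl; ring].
  by rewrite (_ : (theta p N * 1 * (1 - 2 * INR 1) = - theta p N)%R) ?cos_neg ?cth; [ring | simpl; ring].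
have S2 : \big[Rplus/0%R]_(x < N) sin (phase p N x) = 0%R.
  rewrite (@big_trunc R 0%R Rplus (fun x => sin (phase p N x)) p N); last 2 first.
  - lia.
  - by move=> x Hx; rewrite phF ?f_ge // sin_0.
  set S := \big[Rplus/0%R]_(x < p) sin (phase p N x).
  suff : S = (-1 * S)%R by lra.
  rewrite {1}/S (reindex_inj (@sigo_inj p)).
  rewrite (eq_bigr (fun x : 'I_p => (0 + -1 * sin (phase p N x))%R)); last first.
    move=> i _ /=; rewrite /sigf.
    case: eqP => [->|i0]; first by rewrite phF ?f0 // sin_0; ring.
    have Hi : (0 < i < p)%N by have := ltn_ord i; lia.
    case Hf: (foracle p i).
    - rewrite /phase f_sym // Hf /=.
      case: (lsb01 i) => Hl.
      + have -> : lsb (p - i) = 1%N by move: Hl; rewrite /lsb; lia.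
        rewrite Hl (_ : (theta p N * 1 * (1 - 2 * INR 1) = - (theta p N * 1 * (1 - 2 * INR 0)))%R) ?sin_neg; [ring | simpl; ring].
      + have -> : lsb (p - i) = 0%N by move: Hl; rewrite /lsb; lia.
        rewrite Hl (_ : (theta p N * 1 * (1 - 2 * INR 0) = - (theta p N * 1 * (1 - 2 * INR 1)))%R) ?sin_neg; [ring | simpl; ring].
    - rewrite !phF ?f_sym // sin_0; ring.
  rewrite (sum_lin p 0 (-1) (fun x => sin (phase p N x))) -/S; ring.
have S1 : \big[Rplus/0%R]_(x < N) cos (phase p N x) = (INR N / 2)%R.
  rewrite (eq_bigr (fun x : 'I_N => (1 + (c0 - 1) * INR (foracle p x))%R)); last first.
    by move=> i _; rewrite cosph.
  rewrite (sum_lin N 1 (c0 - 1) (fun x => INR (foracle p x))).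
  rewrite (sum_bool N (fun x => foracle p x)) Knat /c0.
  have -> : INR h = (INR (p - 1) / 2)%R by lra.
  field; lra.
have AB : alpha_bar p N = RtoC (/ (2 * sqrt (INR N))).
  rewrite /alpha_bar Csum.
  rewrite [X in (X, _)](eq_bigr (fun x : 'I_N => (0 + / sqrt (INR N) * cos (phase p N x))%R)); last first.
    by move=> i _; rewrite /alpha /cexpi /=; ring.
  rewrite [X in (_, X)](eq_bigr (fun x : 'I_N => (0 + / sqrt (INR N) * sin (phase p N x))%R)); last first.
    by move=> i _; rewrite /alpha /cexpi /=; ring.
  rewrite (sum_lin N 0 (/ sqrt (INR N)) (fun x => cos (phase p N x))).
  rewrite (sum_lin N 0 (/ sqrt (INR N)) (fun x => sin (phase p N x))).
  rewrite S1 S2 /RtoC /Cmult /=.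
  f_equal; field; split; lra.
have B2 : forall x : nat, (x < N)%N ->
    beta p N x = Cmult (RtoC (/ sqrt (INR N))) (Cminus (RtoC 1) (cexpi (phase p N x))).
  move=> x _; rewrite /beta AB /alpha /cexpi /RtoC /Cmult /Cminus /Cplus /Copp /=.
  f_equal; field; lra.
have B3 : forall x : nat, (x < N)%N -> foracle p x = false -> beta p N x = RtoC 0.
  move=> x Hx Hf; rewrite B2 // phF // /cexpi cos_0 sin_0 /RtoC /Cmult /Cminus /Cplus /Copp /=.
  f_equal; ring.
have B4 : forall x : nat, (x < N)%N -> foracle p x = true ->
    (Cmod (beta p N x) ^ 2)%R = (2 / INR (p - 1))%R.
  move=> x Hx Hf; rewrite B2 // Cmod_sq /cexpi /RtoC /Cmult /Cminus /Cplus /Copp /=.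
  have co : cos (phase p N x) = c0 by rewrite cosph Hf /=; ring.
  have ss := sin2_cos2 (phase p N x); rewrite /Rsqr in ss.
  move: ss; rewrite co; set s0 := sin (phase p N x) => ss.
  set a := (/ sqrt (INR N))%R.
  have a2 : (a * a = / INR N)%R by rewrite /a -Rinv_mult sN2.
  transitivity ((a * a) * ((1 - c0) * (1 - c0) + s0 * s0))%R; first by ring.
  rewrite a2 (_ : ((1 - c0) * (1 - c0) + s0 * s0 = 2 - 2 * c0)%R); last by nra.
  rewrite /c0; field; lra.
have BS : forall x : nat, (x < N)%N ->
    (Cmod (beta p N x) ^ 2)%R = (0 + 2 / INR (p - 1) * INR (foracle p x))%R.
  move=> x Hx; case Hf: (foracle p x).
    by rewrite B4 //=; ring.
  by rewrite B3 // Cmod_0 /=; ring.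
have Tot : (\big[Rplus/0%R]_(x < N) (Cmod (beta p N x) ^ 2)%R)%R = 1%R.
  rewrite (eq_bigr (fun x : 'I_N => (0 + 2 / INR (p - 1) * INR (foracle p x))%R)); last first.
    by move=> i _; rewrite BS.
  rewrite (sum_lin N 0 (2 / INR (p - 1)) (fun x => INR (foracle p x))).
  rewrite (sum_bool N (fun x => foracle p x)) Knat.
  have -> : INR h = (INR (p - 1) / 2)%R by lra.
  field; lra.
split => //.
split => //.
- rewrite -[RHS]Tot big_mkcond /=; apply: eq_bigr => i _.
  have E : ((0 < i < p)%N && qnr i p) = foracle p i.
    case: (ltnP i p) => Hi; first by rewrite f_iff // ?Hi andbT.
    by rewrite andbF /=; symmetry; apply: f_ge.
  rewrite E; case Hf: (foracle p i) => //.
  by rewrite B3 // Cmod_0 /=; ring.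
- move=> a Ha Hq.
  have aN : (a < N)%N by lia.
  split => //; apply: B4 => //.
  by rewrite f_iff ?Hq; lia.
- exact: qnr_count.
Qed.
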